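(* Let $n,m,n_f,\ell\in\mathbb{N}$, let $0\leq w<1$ be a number representable with $n$ bits of which the first $m$ are its integer part, and let $f\in[0,1]$ be given with $n_f$ bits after the binary point. Then the value $\hat{t}$ returned by Algorithm FractionalPower2$(w,f,n,m,n_f,\ell)$ (described in the context), which performs its final arithmetic with $b=\max\{n,n_f,\lceil 2\ell+6m+2\ln n_f\rceil,40\}$ bits after the binary point, satisfies $$|\hat{t}-w^f|\leq\frac{1}{2^{\ell-3}}.$$
   Context: Fixed precision representation: a number $w\ge 0$ ''given by $n$ bits of which the first $m$ correspond to its integer part'' means $w=\sum_{j=m-n}^{m-1} w^{(j)}2^j$ with $w^{(j)}\in\{0,1\}$. For $x\geq 0$, ''truncating $x$ to $b$ bits after the binary point'' means replacing $x$ by $\lfloor 2^b x\rfloor/2^b$. All arithmetic inside a step is performed exactly; only the stated truncations introduce error. For $c\ge 0$, $\{c\}=c-\lfloor c\rfloor$. Algorithm INV$(w,n,m,b)$ (input $w\ge1$): if $w=1$ return $1$. Otherwise let $p\in\mathbb{N}$ with $2^p>w\geq 2^{p-1}$, $\hat{x}_0=2^{-p}$, $s=\lceil\log_2 b\rceil$; for $i=1,\dots,s$ compute exactly $x_i=-w\hat{x}_{i-1}^2+2\hat{x}_{i-1}$ and let $\hat{x}_i$ be $x_i$ truncated to $b$ bits. Return $\hat{x}_s$. Algorithm SQRT$(w,n,m,b)$ (input $w\geq 1$): if $w=1$, return $1$. Otherwise compute $\hat{x}_s$ exactly as in the loop of INV$(w,n,m,b)$ (with $s=\lceil\log_2 b\rceil$);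 let $q\in\mathbb{N}$ with $2^{1-q}>\hat{x}_s\geq 2^{-q}$ and set $\hat{y}_0=2^{\lfloor (q-1)/2\rfloor}$; for $j=1,\dots,s$ compute exactly $y_j=\frac12(3\hat{y}_{j-1}-\hat{x}_s\hat{y}_{j-1}^3)$ and let $\hat{y}_j$ be $y_j$ truncated to $b$ bits. Return $\hat{y}_s$. Algorithm PowerOf2Roots$(w,k,n,m,b)$: set $\hat{z}_1=$ SQRT$(w,n,m,b)$; for $i=2,\dots,k$ set $\hat{z}_i=$ SQRT$(\hat{z}_{i-1},m+b,m,b)$. Return $\hat{z}_1,\dots,\hat{z}_k$. Algorithm FractionalPower$(w,f,n,m,n_f,\ell)$ (input $w\geq1$, $f=\sum_{i=1}^{n_f}f_i2^{-i}$ or $f=1$, bits $f_i\in\{0,1\}$): set $b=\max\{n,n_f,\lceil 5(\ell+2m+\ln n_f)\rceil,40\}$. If $f=1$ return $w$; if $f=0$ return $1$. Let $\hat{w}_1,\dots,\hat{w}_{n_f}$ be the outputs of PowerOf2Roots$(w,n_f,n,m,b)$. Set $\hat{z}=1$; for $i=1,\dots,n_f$, if $f_i=1$ replace $\hat{z}$ by $\hat{z}\hat{w}_i$ truncated to $b$ bits. Return $\hat{z}$. Algorithm FractionalPower2$(w,f,n,m,n_f,\ell)$ (input $0\le w<1$, $f\in[0,1]$ with $n_f$ fractional bits): set $b=\max\{n,n_f,\lceil 2\ell+6m+2\ln n_f\rceil,40\}$. If $w=0$ return $0$; if $f=1$ return $w$; if $f=0$ return $1$. Let $k$ be the positive integer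 with $2^kw\geq 1>2^{k-1}w$ and set $x=2^kw$ (exact shift). Set $c=kf$ (exact). Let $\hat{z}=$ FractionalPower$(x,f,n,m,n_f,\ell)$, $\hat{y}=$ FractionalPower$(2,\{c\},n,m,n_f,\ell)$, $\hat{s}=$ INV$(\hat{y},n,1,2\ell)$, $v=2^{-\lfloor c\rfloor}\hat{z}$ (exact shift), and let $\hat{t}$ be $v\hat{s}$ truncated to $b$ bits after the binary point. Return $\hat{t}$. *)

(* Defs.v *)
From Stdlib Require Import Reals ZArith.
Open Scope R_scope.

Definition Rfloorz (x : R) : Z := Int_part x.
Definition Rceilz (x : R) : Z := (- Int_part (- x))%Z.
Definition Rfrac (x : R) : R := x - IZR (Rfloorz x).

Definition flog2 (x : R) : Z := Rfloorz (ln x / ln 2).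

Definition trunc (b : nat) (x : R) : R := IZR (Rfloorz (2 ^ b * x)) / 2 ^ b.

(* s = ceil(log2 b) (with the convention s = 0 for b = 0) *)
Definition nsteps (b : nat) : nat := Nat.log2_up b.

Fixpoint bsum (g : nat -> R) (n : nat) : R :=
  match n with O => 0 | S k => bsum g k + g k end.

(* The loop of INV(w,n,m,b): p with 2^p > w >= 2^(p-1), x0 = 2^-p,
   x_i = trunc_b(-w x_{i-1}^2 + 2 x_{i-1}), i = 1..s. *)
Definition inv_loop (w : R) (b : nat) : R :=
  let p := (flog2 w + 1)%Z in
  Nat.iter (nsteps b) (fun x => trunc b (- w * x ^ 2 + 2 * x)) (powerRZ 2 (- p)).

(* INV(w,n,m,b); n and m only describe the input format. *)
Definition INV (w : R) (b : nat) : R :=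
  if Req_EM_T w 1 then 1 else inv_loop w b.

Definition SQRT (w : R) (b : nat) : R :=
  if Req_EM_T w 1 then 1 else
  let xs := inv_loop w b in
  let q := (- flog2 xs)%Z in            (* 2^(1-q) > xs >= 2^(-q) *)
  let y0 := powerRZ 2 ((q - 1) / 2)%Z in
  Nat.iter (nsteps b) (fun y => trunc b ((3 * y - xs * y ^ 3) / 2)) y0.

(* PowerOf2Roots: root_hat w b i = \hat z_{i+1}, i.e. root_hat w b 0 = \hat z_1. *)
Fixpoint root_hat (w : R) (b : nat) (i : nat) : R :=
  match i with
  | O => SQRT w b
  | S j => SQRT (root_hat w b j) b
  end.

Definition fbit (f : R) (i : nat) : bool := Z.odd (Rfloorz (2 ^ i * f)).

Definition FractionalPower (w f : R) (n m nf l : nat) : R :=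
  let b := Nat.max (Nat.max n nf)
             (Nat.max (Z.to_nat (Rceilz (5 * (INR l + 2 * INR m + ln (INR nf))))) 40) in
  if Req_EM_T f 1 then w else
  if Req_EM_T f 0 then 1 else
  (* loop i = 1..n_f; step j handles i = j+1, using \hat w_{j+1} = root_hat w b j *)
  let fix loop (j : nat) (z : R) : R :=
    match j with
    | O => z
    | S j' => let z' := loop j' z in
              if fbit f (S j') then trunc b (z' * root_hat w b j') else z'
    end in
  loop nf 1.

Definition FractionalPower2 (w f : R) (n m nf l : nat) : R :=
  let b := Nat.max (Nat.max n nf)
             (Nat.max (Z.to_nat (Rceilz (2 * INR l + 6 * INR m + 2 * ln (INR nf)))) 40) in
  if Req_EM_T w 0 then 0 else
  if Req_EM_T f 1 then w else
  if Req_EM_T f 0 then 1 else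
  let k := (- flog2 w)%Z in           (* 2^k w >= 1 > 2^(k-1) w *)
  let x := powerRZ 2 k * w in
  let c := IZR k * f in
  let zh := FractionalPower x f n m nf l in
  let yh := FractionalPower 2 (Rfrac c) n m nf l in
  let sh := INV yh (2 * l) in
  let v := powerRZ 2 (- Rfloorz c) * zh in
  trunc b (v * sh).

(* real power w^f for w >= 0; convention 0^f = 0 *)
Definition rpow (w f : R) : R := if Rlt_dec 0 w then Rpower w f else 0.

(* w >= 0 given by n bits of which the first m are its integer part *)
Definition fixed_repr (w : R) (n m : nat) : Prop :=
  exists wb : nat -> bool,
    w = bsum (fun j => if wb j then powerRZ 2 (Z.of_nat j + Z.of_nat m - Z.of_nat n) else 0) n.

(* f = sum_{i=1}^{n_f} f_i 2^-i  or  f = 1 *)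
Definition frac_repr (f : R) (nf : nat) : Prop :=
  (exists fb : nat -> bool,
     f = bsum (fun i => if fb i then / 2 ^ (S i) else 0) nf) \/ f = 1.

(* Main.v *)
Require Import Defs.
From Stdlib Require Import Reals ZArith Lia Lra Psatz.
Open Scope R_scope.

Lemma floor_spec (x : R) : IZR (Rfloorz x) <= x < IZR (Rfloorz x) + 1.
Proof. unfold Rfloorz. destruct (base_Int_part x). lra. Qed.

Lemma floor_unique (x : R) (z : Z) : IZR z <= x < IZR z + 1 -> Rfloorz x = z.
Proof.
  intros [H1 H2]. unfold Rfloorz, Int_part.
  assert (z + 1 = up x)%Z. { apply tech_up; rewrite plus_IZR; lra. } lia.
Qed.

Lemma floor_int (z : Z) : Rfloorz (IZR z) = z.
Proof. apply floor_unique. lra. Qed.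

Lemma pow2_pos (b : nat) : 0 < 2 ^ b.
Proof. apply pow_lt; lra. Qed.

Lemma trunc_spec (b : nat) (x : R) : x - / 2 ^ b < trunc b x <= x.
Proof.
  unfold trunc. pose proof (pow2_pos b). destruct (floor_spec (2 ^ b * x)) as [H1 H2].
  split.
  - apply (Rmult_lt_reg_l (2 ^ b)); auto.
    replace (2 ^ b * (IZR (Rfloorz (2 ^ b * x)) / 2 ^ b)) with (IZR (Rfloorz (2 ^ b * x))) by (field; lra).
    rewrite Rmult_minus_distr_l, Rinv_r; lra.
  - apply (Rmult_le_reg_l (2 ^ b)); auto.
    replace (2 ^ b * (IZR (Rfloorz (2 ^ b * x)) / 2 ^ b)) with (IZR (Rfloorz (2 ^ b * x))) by (field; lra). lra.
Qed.

Lemma trunc_nonneg (b : nat) (x : R) : 0 <= x -> 0 <= trunc b x.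
Proof.
  intros Hx. unfold trunc. pose proof (pow2_pos b). destruct (floor_spec (2 ^ b * x)) as [H1 H2].
  assert (0 <= 2 ^ b * x) by nra.
  assert (IZR (-1) < IZR (Rfloorz (2 ^ b * x))) by lra.
  apply lt_IZR in H3. assert (0 <= Rfloorz (2 ^ b * x))%Z by lia. apply IZR_le in H4.
  unfold Rdiv. apply Rmult_le_pos; auto. left; apply Rinv_0_lt_compat; auto.
Qed.

Lemma ln_le' (x y : R) : 0 < x -> x <= y -> ln x <= ln y.
Proof. intros. destruct H0. left; apply ln_increasing; auto. subst; lra. Qed.

Lemma exp_le' (x y : R) : x <= y -> exp x <= exp y.
Proof. intros. destruct H. left; apply exp_increasing; auto. subst; lra. Qed.

Lemma ln_1m (u : R) : 0 <= u <= 1/2 -> -2*u <= ln (1 - u) <= 0.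
Proof.
  intros Hu. split.
  - rewrite <- (ln_exp (-2*u)). apply ln_le'. apply exp_pos.
    pose proof (exp_ineq1_le (2*u)).
    assert (exp (-2*u) * exp (2*u) = 1). { rewrite <- exp_plus. replace (-2*u+2*u) with 0 by ring. apply exp_0. }
    assert (0 < exp (-2*u)) by apply exp_pos.
    nra.
  - rewrite <- ln_1. apply ln_le'; lra.
Qed.

Lemma exp_bound (t : R) : Rabs t <= 1/2 -> Rabs (exp t - 1) <= 2 * Rabs t.
Proof.
  intros Ht. pose proof (exp_ineq1_le t). pose proof (exp_ineq1_le (-t)).
  assert (exp t * exp (-t) = 1). { rewrite <- exp_plus. replace (t+-t) with 0 by ring. apply exp_0. }
  pose proof (exp_pos t). pose proof (exp_pos (-t)).
  assert (Ht2 : -(1/2) <= t <= 1/2) by (unfold Rabs in Ht; destruct (Rcase_abs t); lra). clear Ht.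
  destruct (Rle_dec 0 t).
  - rewrite Rabs_right by lra. rewrite Rabs_right by lra.
    assert (exp t * (1 - t) <= 1) by nra. nra.
  - assert (exp t <= 1). { assert (1 - t >= 1) by lra. nra. }
    rewrite Rabs_left1 by lra. rewrite Rabs_left1 by lra.
    lra.
Qed.

Lemma ln2_pos : 0 < ln 2.
Proof. pose proof ln_lt_2. lra. Qed.

Lemma pRZ_exp (z : Z) : powerRZ 2 z = exp (IZR z * ln 2).
Proof. rewrite powerRZ_Rpower by lra. reflexivity. Qed.

Lemma ln_pRZ (z : Z) : ln (powerRZ 2 z) = IZR z * ln 2.
Proof. rewrite pRZ_exp, ln_exp. reflexivity. Qed.

Lemma pRZ_pos (z : Z) : 0 < powerRZ 2 z.
Proof. rewrite pRZ_exp. apply exp_pos. Qed.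

Lemma pRZ_add (a c : Z) : powerRZ 2 (a + c) = powerRZ 2 a * powerRZ 2 c.
Proof. rewrite !pRZ_exp, <- exp_plus, plus_IZR. f_equal. ring. Qed.

Lemma pRZ_1 : powerRZ 2 1 = 2.
Proof. simpl. ring. Qed.

Lemma flog2_spec (x : R) : 0 < x ->
  powerRZ 2 (flog2 x) <= x < powerRZ 2 (flog2 x + 1).
Proof.
  intros Hx. unfold flog2. set (t := ln x / ln 2).
  destruct (floor_spec t) as [H1 H2]. pose proof ln2_pos.
  rewrite !pRZ_exp. rewrite <- (exp_ln x) by auto.
  assert (ln x = t * ln 2) by (unfold t; field; lra).
  rewrite H0, plus_IZR. split.
  - apply exp_le'. nra.
  - apply exp_increasing. nra.
Qed.

Lemma pow_pRZ (k : nat) : 2 ^ k = powerRZ 2 (Z.of_nat k).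
Proof. rewrite <- pow_powerRZ. reflexivity. Qed.

Lemma inv_step (w : R) (b : nat) (x : R) : 0 < w -> 0 <= x -> 0 <= 1 - w * x ->
  0 <= trunc b (- w * x ^ 2 + 2 * x) /\
  (1 - w * x) ^ 2 <= 1 - w * trunc b (- w * x ^ 2 + 2 * x) <= (1 - w * x) ^ 2 + w / 2 ^ b.
Proof.
  intros Hw Hx He. set (y := - w * x ^ 2 + 2 * x).
  assert (Hy : 0 <= y) by (unfold y; nra).
  destruct (trunc_spec b y) as [T1 T2]. pose proof (trunc_nonneg b y Hy).
  assert (E : 1 - w * y = (1 - w * x) ^ 2) by (unfold y; ring).
  split; auto. split.
  - rewrite <- E. nra.
  - rewrite <- E. unfold Rdiv. nra.
Qed.

Lemma init_x0 (w : R) : 0 < w ->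
  0 <= 1 - w * powerRZ 2 (- (flog2 w + 1)) <= 1/2 /\ 0 < powerRZ 2 (- (flog2 w + 1)).
Proof.
  intros Hw. destruct (flog2_spec w Hw) as [H1 H2].
  rewrite powerRZ_neg'. pose proof (pRZ_pos (flog2 w + 1)).
  rewrite pRZ_add, pRZ_1 in *. pose proof (pRZ_pos (flog2 w)).
  split; [split|].
  - apply Rmult_le_reg_r with (powerRZ 2 (flog2 w) * 2); auto.
    field_simplify; lra.
  - apply Rmult_le_reg_r with (powerRZ 2 (flog2 w) * 2); auto.
    field_simplify; lra.
  - apply Rinv_0_lt_compat; auto.
Qed.

Lemma inv_iter (w : R) (b : nat) (x0 : R) : 0 < w -> 0 <= x0 -> 0 <= 1 - w * x0 ->
  forall j, 0 <= Nat.iter j (fun x => trunc b (- w * x ^ 2 + 2 * x)) x0 /\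
    0 <= 1 - w * Nat.iter j (fun x => trunc b (- w * x ^ 2 + 2 * x)) x0 /\
    1 - w * Nat.iter (S j) (fun x => trunc b (- w * x ^ 2 + 2 * x)) x0 <=
      (1 - w * Nat.iter j (fun x => trunc b (- w * x ^ 2 + 2 * x)) x0) ^ 2 + w / 2 ^ b.
Proof.
  intros Hw H0 H1. induction j as [|j IH].
  - simpl. split; auto. split; auto. destruct (inv_step w b x0 Hw H0 H1) as [_ [_ ?]]. auto.
  - destruct IH as [A1 [A2 A3]].
    set (xj := Nat.iter j (fun x => trunc b (- w * x ^ 2 + 2 * x)) x0) in *.
    destruct (inv_step w b xj Hw A1 A2) as [B1 [B2 B3]].
    change (Nat.iter (S j) (fun x => trunc b (- w * x ^ 2 + 2 * x)) x0) with
      (trunc b (- w * xj ^ 2 + 2 * xj)).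
    split; auto. split. { pose proof (pow2_ge_0 (1 - w * xj)). lra. }
    set (x1 := trunc b (- w * xj ^ 2 + 2 * xj)).
    assert (0 <= 1 - w * x1) by (unfold x1; nra).
    destruct (inv_step w b x1 Hw B1 H) as [_ [_ ?]]. exact H2.
Qed.

Lemma sq_conv (e : nat -> R) (D : R) : 0 <= D <= 1/18 -> (forall j, 0 <= e j) ->
  (forall j, e (S j) <= e j ^ 2 + D) -> e 0%nat <= 1/4 + 3 * D ->
  forall j, e j <= / 2 ^ (Nat.pow 2 (S j)) + 3 * D.
Proof.
  intros HD He Hs H0 j. induction j as [|j IH].
  - simpl. lra.
  - set (A := / 2 ^ (Nat.pow 2 (S j))) in *.
    assert (HA : 0 < A /\ A <= 1/4).
    { unfold A. split. apply Rinv_0_lt_compat, pow2_pos.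
      assert (4 <= 2 ^ (Nat.pow 2 (S j))).
      { replace 4 with (2 ^ 2) by ring. apply Rle_pow; try lra.
        simpl. pose proof (Nat.pow_le_mono_r 2 0 j). simpl in H. lia. }
      apply Rmult_le_reg_l with (2 ^ Nat.pow 2 (S j)). apply pow2_pos.
      unfold A. rewrite Rinv_r. lra. pose proof (pow2_pos (Nat.pow 2 (S j))). lra. }
    assert (E : / 2 ^ (Nat.pow 2 (S (S j))) = A ^ 2).
    { unfold A. rewrite pow_inv. f_equal. rewrite <- pow_mult. f_equal. simpl. lia. }
    rewrite E. specialize (Hs j). specialize (He j).
    assert (e j ^ 2 <= (A + 3 * D) ^ 2) by (apply pow_incr; lra).
    nra.
Qed.

Lemma inv_loop_weak (w : R) (b : nat) : 0 < w ->
  0 <= inv_loop w b /\ 0 <= 1 - w * inv_loop w b.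
Proof.
  intros Hw. destruct (init_x0 w Hw) as [[I1 I2] I3]. unfold inv_loop.
  destruct (inv_iter w b _ Hw (Rlt_le _ _ I3) I1 (nsteps b)) as [? [? _]]. auto.
Qed.

Lemma inv_loop_strong (w : R) (b : nat) : 0 < w -> (1 < b)%nat -> w / 2 ^ b <= 1/18 ->
  1 - w * inv_loop w b <= / 2 ^ (Nat.pow 2 (nsteps b)) + 3 * (w / 2 ^ b).
Proof.
  intros Hw Hb Hd. destruct (init_x0 w Hw) as [[I1 I2] I3]. unfold inv_loop.
  set (x0 := powerRZ 2 (- (flog2 w + 1))) in *.
  set (F := fun x => trunc b (- w * x ^ 2 + 2 * x)).
  pose proof (inv_iter w b x0 Hw (Rlt_le _ _ I3) I1) as IT. fold F in IT.
  assert (Hs : (0 < nsteps b)%nat) by (apply Nat.log2_up_pos; auto).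
  destruct (nsteps b) as [|s] eqn:Es; [lia|].
  assert (Hd0 : 0 <= w / 2 ^ b) by (unfold Rdiv; apply Rmult_le_pos; [lra| left; apply Rinv_0_lt_compat, pow2_pos]).
  pose proof (sq_conv (fun j => 1 - w * Nat.iter (S j) F x0) (w / 2 ^ b)) as SC.
  simpl in SC. apply SC; auto.
  - intros j. destruct (IT (S j)) as [_ [? _]]. auto.
  - intros j. destruct (IT (S j)) as [_ [_ ?]]. auto.
  - destruct (IT 0%nat) as [_ [_ ?]]. simpl in H.
    assert ((1 - w * x0) ^ 2 <= 1/4) by (simpl; nra). lra.
Qed.

Definition gq (e : R) := (3 * e ^ 2 + e ^ 3) / 4.

Lemma isq_step (xs : R) (b : nat) (y : R) : 0 < xs <= 2 -> 0 <= y -> 0 <= 1 - xs * y ^ 2 <= 1 ->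
  0 <= trunc b ((3 * y - xs * y ^ 3) / 2) /\
  gq (1 - xs * y ^ 2) <= 1 - xs * trunc b ((3 * y - xs * y ^ 3) / 2) ^ 2
     <= gq (1 - xs * y ^ 2) + 4 / 2 ^ b.
Proof.
  intros Hx Hy He. set (e := 1 - xs * y ^ 2) in *.
  set (Y := (3 * y - xs * y ^ 3) / 2).
  assert (EY : Y = y * (2 + e) / 2) by (unfold Y, e; field).
  assert (HY : 0 <= Y) by (rewrite EY; unfold Rdiv; apply Rmult_le_pos; [nra|lra]).
  assert (E : 1 - xs * Y ^ 2 = gq e) by (rewrite EY; unfold gq, e; field).
  assert (Hg : 0 <= gq e <= 1) by (unfold gq; split; nra).
  destruct (trunc_spec b Y) as [T1 T2]. pose proof (trunc_nonneg b Y HY).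
  set (y' := trunc b Y) in *.
  assert (HxY : xs * Y <= 2).
  { assert (H1 : 0 <= xs * Y ^ 2 <= 1) by (split; [apply Rmult_le_pos; [lra| apply pow2_ge_0] | lra]).
    assert ((xs * Y) ^ 2 <= 2 * 2). { replace ((xs*Y)^2) with (xs * (xs * Y^2)) by ring.
      apply Rmult_le_compat; lra. }
    assert (0 <= xs * Y) by (apply Rmult_le_pos; lra).
    destruct (Rle_dec (xs * Y) 2) as [?|Hn]; auto. exfalso.
    assert (2 * 2 < (xs * Y) * (xs * Y)) by (apply Rmult_le_0_lt_compat; lra). simpl in H0. lra. }
  pose proof (pow2_pos b).
  assert (Hd : Y - y' <= / 2 ^ b) by lra.
  split; auto. split.
  - rewrite <- E. assert (y' ^ 2 <= Y ^ 2) by (apply pow_incr; lra).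
    assert (xs * y' ^ 2 <= xs * Y ^ 2) by (apply Rmult_le_compat_l; lra). lra.
  - rewrite <- E.
    assert (xs * (Y ^ 2 - y' ^ 2) <= 4 / 2 ^ b).
    { replace (Y ^ 2 - y' ^ 2) with ((Y - y') * (Y + y')) by ring.
      assert (xs * (Y + y') <= 4) by nra.
      assert (0 <= Y - y') by lra.
      assert (xs * ((Y - y') * (Y + y')) = (Y - y') * (xs * (Y + y'))) by ring.
      rewrite H3. unfold Rdiv. assert (0 <= xs * (Y + y')) by nra.
      apply Rle_trans with (/ 2 ^ b * (xs * (Y + y'))). apply Rmult_le_compat_r; lra.
      rewrite Rmult_comm. apply Rmult_le_compat_r. left; apply Rinv_0_lt_compat; lra. lra. }
    lra.
Qed.

Lemma isq_iter (xs : R) (b : nat) (y0 : R) : 0 < xs <= 2 -> 0 <= y0 ->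
  0 <= 1 - xs * y0 ^ 2 <= 3/4 -> 4 / 2 ^ b <= 1/500 ->
  forall j,
  let it j := Nat.iter j (fun y => trunc b ((3 * y - xs * y ^ 3) / 2)) y0 in
  0 <= it j /\ 0 <= 1 - xs * (it j) ^ 2 <= 3/4 /\
  gq (1 - xs * (it j) ^ 2) <= 1 - xs * (it (S j)) ^ 2 <= gq (1 - xs * (it j) ^ 2) + 4 / 2 ^ b.
Proof.
  intros Hx Hy0 He0 HD j it. induction j as [|j IH].
  - simpl. split; auto. split; auto.
    destruct (isq_step xs b y0 Hx Hy0 ltac:(lra)) as [_ ?]. auto.
  - destruct IH as [A1 [A2 A3]].
    change (it (S j)) with (trunc b ((3 * it j - xs * it j ^ 3) / 2)) in *.
    destruct (isq_step xs b (it j) Hx A1 ltac:(lra)) as [B1 B2].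
    set (y1 := trunc b ((3 * it j - xs * it j ^ 3) / 2)) in *.
    assert (G : gq (1 - xs * it j ^ 2) <= gq (3/4)).
    { unfold gq. set (u := 1 - xs * it j ^ 2) in *. 
      assert (u^2 <= (3/4)^2) by (apply pow_incr; lra).
      assert (u^3 <= (3/4)^3) by (apply pow_incr; lra). lra. }
    assert (Hg0 : 0 <= gq (1 - xs * it j ^ 2)) by (unfold gq; set (u := 1 - xs * it j ^ 2) in *; nra).
    assert (HH : 0 <= 1 - xs * y1 ^ 2 <= 3/4) by (unfold gq in *; lra).
    split; auto. split; auto.
    change (it (S (S j))) with (trunc b ((3 * y1 - xs * y1 ^ 3) / 2)).
    destruct (isq_step xs b y1 Hx B1 ltac:(lra)) as [_ ?]. auto.
Qed.

Lemma isq_final (xs : R) (b : nat) (y0 : R) : 0 < xs <= 2 -> 0 <= y0 ->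
  0 <= 1 - xs * y0 ^ 2 <= 3/4 -> 4 / 2 ^ b <= 1/500 ->
  forall j,
  let it j := Nat.iter j (fun y => trunc b ((3 * y - xs * y ^ 3) / 2)) y0 in
  0 <= it j /\ 0 <= 1 - xs * (it j) ^ 2 /\
  1 - xs * (it (S (S j))) ^ 2 <= / 2 ^ (Nat.pow 2 (S j)) + 3 * (4 / 2 ^ b).
Proof.
  intros Hx Hy0 He0 HD j it.
  pose proof (isq_iter xs b y0 Hx Hy0 He0 HD) as IT. fold it in IT.
  destruct (IT j) as [A1 [A2 _]]. split; auto. split; [lra|].
  assert (HD0 : 0 <= 4 / 2 ^ b) by (unfold Rdiv; apply Rmult_le_pos; [lra|left; apply Rinv_0_lt_compat, pow2_pos]).
  assert (gle : forall e, 0 <= e <= 1 -> gq e <= e ^ 2) by (intros; unfold gq; simpl; nra).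
  apply (sq_conv (fun j => 1 - xs * it (S (S j)) ^ 2) (4 / 2 ^ b)); auto.
  - lra.
  - intros k. destruct (IT (S (S k))) as [_ [? _]]. lra.
  - intros k. destruct (IT (S (S k))) as [_ [H1 [_ H2]]].
    assert (gq (1 - xs * it (S (S k)) ^ 2) <= (1 - xs * it (S (S k)) ^ 2) ^ 2) by (apply gle; lra). lra.
  - destruct (IT 0%nat) as [_ [[H0a H0b] [_ H1]]]. destruct (IT 1%nat) as [_ [[H1a H1b] [_ H2]]].
    assert (gq (1 - xs * it 0%nat ^ 2) <= gq (3/4)).
    { unfold gq. set (u := 1 - xs * it 0%nat ^ 2) in *.
      assert (u^2 <= (3/4)^2) by (apply pow_incr; lra).
      assert (u^3 <= (3/4)^3) by (apply pow_incr; lra). lra. }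
    assert (gq (1 - xs * it 1%nat ^ 2) <= gq (53/100)).
    { unfold gq in *. set (u := 1 - xs * it 1%nat ^ 2) in *.
      assert (u <= 53/100) by lra.
      assert (u^2 <= (53/100)^2) by (apply pow_incr; lra).
      assert (u^3 <= (53/100)^3) by (apply pow_incr; lra). lra. }
    unfold gq in *. lra.
Qed.

Lemma nsteps_facts (b : nat) : (40 <= b)%nat ->
  (6 <= nsteps b)%nat /\ (b <= Nat.pow 2 (nsteps b))%nat /\ (Nat.pow 2 (pred (nsteps b)) < b)%nat.
Proof.
  intros Hb. destruct (Nat.log2_up_spec b ltac:(lia)) as [H1 H2]. unfold nsteps.
  split; [|split; auto].
  destruct (le_lt_dec 6 (Nat.log2_up b)) as [?|Hl]; auto.
  assert (Nat.pow 2 (Nat.log2_up b) <= Nat.pow 2 5)%nat by (apply Nat.pow_le_mono_r; lia).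
  simpl in H. lia.
Qed.

Lemma y0_spec (xs : R) : 0 < xs ->
  0 < powerRZ 2 ((- flog2 xs - 1) / 2) /\
  0 <= 1 - xs * (powerRZ 2 ((- flog2 xs - 1) / 2)) ^ 2 <= 3/4.
Proof.
  intros Hx. destruct (flog2_spec xs Hx) as [H1 H2].
  set (F := flog2 xs) in *. set (r := ((- F - 1) / 2)%Z).
  set (t := ((- F - 1) mod 2)%Z).
  assert (Hd : (- F - 1 = 2 * r + t)%Z) by (apply Z.div_mod; lia).
  assert (Ht : (0 <= t < 2)%Z) by (apply Z.mod_pos_bound; lia).
  split. apply pRZ_pos.
  assert (E : (powerRZ 2 r) ^ 2 = / powerRZ 2 F * powerRZ 2 (-1 - t)).
  { replace ((powerRZ 2 r)^2) with (powerRZ 2 r * powerRZ 2 r) by ring. rewrite <- pRZ_add, <- powerRZ_neg', <- pRZ_add. f_equal. lia. }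
  rewrite E. rewrite pRZ_add, pRZ_1 in H2. pose proof (pRZ_pos F).
  assert (HP : 1 <= xs / powerRZ 2 F < 2).
  { split. apply Rmult_le_reg_r with (powerRZ 2 F); auto. field_simplify; lra.
    apply Rmult_lt_reg_r with (powerRZ 2 F); auto. field_simplify; lra. }
  assert (xs * (/ powerRZ 2 F * powerRZ 2 (-1 - t)) = xs / powerRZ 2 F * powerRZ 2 (-1 - t)) by (unfold Rdiv; ring).
  rewrite H0.
  assert (t = 0 \/ t = 1)%Z as [Et|Et] by lia; rewrite Et; simpl;
  split; nra.
Qed.

Definition lam (b : nat) : R := / 2 ^ (Nat.pow 2 (pred (nsteps b))) + 19 / 2 ^ b.

Lemma inv_pow_le (a c : nat) : (a <= c)%nat -> / 2 ^ c <= / 2 ^ a.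
Proof.
  intros. apply Rinv_le_contravar. apply pow2_pos. apply Rle_pow; lra || auto.
Qed.

Lemma small_b (b : nat) : (40 <= b)%nat -> / 2 ^ b <= / 2 ^ 40.
Proof. apply inv_pow_le. Qed.

Lemma sqrt_lemma (a : R) (b : nat) : 1/2 <= a <= 2 -> (40 <= b)%nat ->
  0 < SQRT a b /\ Rabs (ln (SQRT a b) - ln a / 2) <= lam b.
Proof.
  intros Ha Hb. pose proof (small_b b Hb) as Sb.
  assert (P40 : / 2 ^ 40 = 1 / 1099511627776) by (simpl; field).
  pose proof (pow2_pos b) as Pb. assert (Ib : 0 < / 2 ^ b) by (apply Rinv_0_lt_compat; auto).
  destruct (nsteps_facts b Hb) as [N1 [N2 N3]].
  assert (Hlam : 0 <= lam b).
  { unfold lam. pose proof (pow2_pos (Nat.pow 2 (pred (nsteps b)))).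
    assert (0 < / 2 ^ Nat.pow 2 (pred (nsteps b))) by (apply Rinv_0_lt_compat; auto). unfold Rdiv. nra. }
  unfold SQRT. destruct (Req_EM_T a 1) as [Ea|Ea].
  { subst. rewrite ln_1. split; [lra|]. replace (0 - 0/2) with 0 by field. rewrite Rabs_R0. auto. }
  cbv zeta.
  set (xs := inv_loop a b).
  destruct (inv_loop_weak a b ltac:(lra)) as [X1 X2]. fold xs in X1, X2.
  assert (Hd : a / 2 ^ b <= 1/18) by (unfold Rdiv; nra).
  pose proof (inv_loop_strong a b ltac:(lra) ltac:(lia) Hd) as X3. fold xs in X3.
  pose proof (inv_pow_le _ _ N2) as N2'.
  set (ex := 1 - a * xs) in *.
  assert (a * / 2 ^ b <= 2 * / 2 ^ b) by (apply Rmult_le_compat_r; lra).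
  assert (Hex : ex <= 7 / 2 ^ b) by (unfold Rdiv in *; lra).
  assert (Hxs : 0 < xs <= 2).
  { split. destruct X1 as [?|E]; auto. exfalso. unfold ex in Hex. rewrite <- E in Hex. lra.
    assert (a * xs <= 1) by (unfold ex in X2; lra). nra. }
  destruct (y0_spec xs (proj1 Hxs)) as [Y1 Y2].
  set (y0 := powerRZ 2 ((- flog2 xs - 1) / 2)) in *.
  replace ((- flog2 xs - 1) / 2)%Z with ((- flog2 xs - 1) / 2)%Z by reflexivity.
  change (powerRZ 2 ((- flog2 xs - 1) / 2)) with y0.
  assert (HD : 4 / 2 ^ b <= 1/500) by (unfold Rdiv; lra).
  destruct (nsteps b) as [|[|s]] eqn:Es; try lia.
  pose proof (isq_final xs b y0 Hxs (Rlt_le _ _ Y1) Y2 HD s) as [_ [F1 F2]].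
  set (yh := Nat.iter (S (S s)) (fun y => trunc b ((3 * y - xs * y ^ 3) / 2)) y0) in *.
  simpl pred in *.
  set (es := 1 - xs * yh ^ 2) in *.
  pose proof (inv_pow_le _ _ (Nat.lt_le_incl _ _ N3)) as N3'.
  assert (Np : (32 <= Nat.pow 2 (S s))%nat) by (change 32%nat with (Nat.pow 2 5); apply Nat.pow_le_mono_r; lia).
  pose proof (inv_pow_le _ _ Np) as Np'.
  assert (/ 2 ^ 32 = 1/4294967296) by (simpl; field).
  assert (Hes : es <= 1/2) by (unfold Rdiv in *; lra).
  assert (Hyh : 0 < yh).
  { destruct (isq_final xs b y0 Hxs (Rlt_le _ _ Y1) Y2 HD (S (S s))) as [G _]. fold yh in G.
    destruct G as [?|E]; auto. exfalso. unfold es in Hes. rewrite <- E in Hes. simpl in Hes. lra. }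
  split; auto.
  assert (Eq : yh ^ 2 = a * (1 - es) * / (1 - ex)).
  { unfold es, ex. field. intro Hc. assert (0 < a * xs) by (apply Rmult_lt_0_compat; lra). lra. }
  assert (L : 2 * ln yh = ln a + ln (1 - es) - ln (1 - ex)).
  { replace (2 * ln yh) with (ln (yh ^ 2)) by (rewrite (ln_pow yh Hyh 2); simpl; ring).
    assert (0 < 1 - es) by lra. assert (0 < 1 - ex) by lra.
    rewrite Eq, (ln_mult (a * (1 - es))), (ln_mult a), ln_Rinv; try lra.
    apply Rmult_lt_0_compat; lra. apply Rinv_0_lt_compat; lra. }
  assert (0 <= ex <= 1/2) by (split; unfold Rdiv in *; lra).
  assert (0 <= es <= 1/2).
  { destruct (isq_final xs b y0 Hxs (Rlt_le _ _ Y1) Y2 HD (S (S s))) as [_ [G _]]. fold yh in G. split; auto. }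
  destruct (ln_1m es) as [L1 L2]; auto. destruct (ln_1m ex) as [L3 L4]; auto.
  unfold lam. rewrite Es. simpl pred. apply Rabs_le. unfold Rdiv in *. split; nra.
Qed.

Lemma lam_small (b : nat) : (40 <= b)%nat -> 0 <= lam b <= 1/1000000.
Proof.
  intros Hb. destruct (nsteps_facts b Hb) as [N1 [N2 N3]]. unfold lam.
  assert (Np : (32 <= Nat.pow 2 (pred (nsteps b)))%nat).
  { change 32%nat with (Nat.pow 2 5). apply Nat.pow_le_mono_r; lia. }
  pose proof (inv_pow_le _ _ Np). pose proof (small_b b Hb).
  assert (/ 2 ^ 32 = 1/4294967296) by (simpl; field).
  assert (/ 2 ^ 40 = 1/1099511627776) by (simpl; field).
  pose proof (pow2_pos b). pose proof (pow2_pos (Nat.pow 2 (pred (nsteps b)))).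
  assert (0 < / 2 ^ b) by (apply Rinv_0_lt_compat; auto).
  assert (0 < / 2 ^ (Nat.pow 2 (pred (nsteps b)))) by (apply Rinv_0_lt_compat; auto).
  unfold Rdiv in *. lra.
Qed.

Lemma Rabs_split (y c : R) : Rabs y <= c -> - c <= y <= c.
Proof. unfold Rabs. destruct (Rcase_abs y); lra. Qed.

Lemma ln_bounds_pos (a t : R) : 0 < a -> ln a >= - t -> t <= ln 2 -> 1/2 <= a.
Proof.
  intros Ha H1 H2. rewrite <- (exp_ln a) by auto.
  replace (1/2) with (exp (ln (1/2))) by (apply exp_ln; lra).
  apply exp_le'. unfold Rdiv. rewrite Rmult_1_l, ln_Rinv by lra. lra.
Qed.

Lemma ln_bounds_up (a t : R) : 0 < a -> ln a <= t -> t <= ln 2 -> a <= 2.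
Proof.
  intros Ha H1 H2. rewrite <- (exp_ln a) by auto.
  apply Rle_trans with (exp (ln 2)). apply exp_le'; lra. rewrite exp_ln; lra.
Qed.

Lemma root_lemma (x : R) (b : nat) : 1 <= x <= 2 -> (40 <= b)%nat ->
  forall j, 0 < root_hat x b j /\ Rabs (ln (root_hat x b j) - ln x / 2 ^ (S j)) <= 2 * lam b.
Proof.
  intros Hx Hb. pose proof (lam_small b Hb) as Hl. pose proof ln_lt_2 as L2.
  assert (Lx : 0 <= ln x <= ln 2).
  { split. rewrite <- ln_1. apply ln_le'; lra. apply ln_le'; lra. }
  induction j as [|j [IH1 IH2]].
  - simpl. destruct (sqrt_lemma x b ltac:(lra) Hb) as [S1 S2]. split; auto.
    replace (2 * 1) with 2 by ring. lra.
  - simpl root_hat. set (a := root_hat x b j) in *.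
    assert (Pj : 0 < 2 ^ S j) by apply pow2_pos.
    assert (Qj : 0 <= ln x / 2 ^ S j <= ln 2 / 2).
    { split. unfold Rdiv. apply Rmult_le_pos; [lra| left; apply Rinv_0_lt_compat; auto].
      assert (2 <= 2 ^ S j) by (replace 2 with (2 ^ 1) at 1 by ring; apply Rle_pow; lia || lra).
      assert (/ 2 ^ S j <= / 2) by (apply Rinv_le_contravar; lra).
      unfold Rdiv. apply Rle_trans with (ln x * / 2). apply Rmult_le_compat_l; lra. lra. }
    apply Rabs_split in IH2.
    assert (Ha : 1/2 <= a <= 2) by (split; [apply (ln_bounds_pos a (2 * lam b)) | apply (ln_bounds_up a (ln 2 / 2 + 2 * lam b))]; auto; lra).
    destruct (sqrt_lemma a b Ha Hb) as [S1 S2]; split; auto.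
    assert (E : ln x / 2 ^ S (S j) = (ln x / 2 ^ S j) / 2).
    { replace (2 ^ S (S j)) with (2 ^ S j * 2) by (simpl; ring). field. lra. }
    rewrite E. apply Rabs_split in S2. apply Rabs_le. lra.
Qed.

Definition Gs (f : R) (j : nat) : R := IZR (Rfloorz (2 ^ j * f)) / 2 ^ j.

Lemma floor_nonneg (y : R) : 0 <= y -> (0 <= Rfloorz y)%Z.
Proof.
  intros. destruct (floor_spec y). assert (IZR (-1) < IZR (Rfloorz y)) by lra.
  apply lt_IZR in H2. lia.
Qed.

Lemma Gs_step (f : R) (j : nat) :
  Gs f (S j) = Gs f j + (if fbit f (S j) then / 2 ^ (S j) else 0).
Proof.
  unfold Gs, fbit. set (y := 2 ^ j * f).
  assert (Ey : 2 ^ S j * f = 2 * y) by (unfold y; simpl; ring). rewrite Ey.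
  set (Fv := Rfloorz (2 * y)).
  assert (Hf : Rfloorz y = Z.div2 Fv).
  { destruct (floor_spec (2 * y)) as [H1 H2]. fold Fv in H1, H2.
    pose proof (Z.div2_odd Fv) as Hd.
    apply floor_unique.
    assert (IZR Fv = 2 * IZR (Z.div2 Fv) + IZR (Z.b2z (Z.odd Fv))) by (rewrite Hd at 1; rewrite plus_IZR, mult_IZR; reflexivity).
    assert (0 <= IZR (Z.b2z (Z.odd Fv)) <= 1) by (destruct (Z.odd Fv); simpl; lra).
    lra. }
  rewrite Hf. pose proof (Z.div2_odd Fv) as Hd.
  assert (E2 : 2 ^ S j = 2 * 2 ^ j) by (simpl; ring). rewrite E2.
  pose proof (pow2_pos j).
  rewrite Hd at 1. rewrite plus_IZR, mult_IZR.
  destruct (Z.odd Fv); simpl; field; lra.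
Qed.

Lemma Gs_0 (f : R) : 0 <= f < 1 -> Gs f 0 = 0.
Proof. intros. unfold Gs. simpl. rewrite Rmult_1_l. rewrite (floor_unique f 0); [simpl; field| simpl; lra]. Qed.

Lemma Gs_nf (f : R) (nf : nat) (z : Z) : 2 ^ nf * f = IZR z -> Gs f nf = f.
Proof.
  intros H. unfold Gs. rewrite H, floor_int, <- H. field. apply pow_nonzero; lra.
Qed.

Lemma Gs_nonneg (f : R) (j : nat) : 0 <= f -> 0 <= Gs f j.
Proof.
  intros. unfold Gs. pose proof (pow2_pos j).
  assert (0 <= 2 ^ j * f) by (apply Rmult_le_pos; lra).
  apply floor_nonneg, IZR_le in H1. unfold Rdiv. apply Rmult_le_pos; auto.
  left; apply Rinv_0_lt_compat; auto.
Qed.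

Fixpoint ploop (f : R) (b : nat) (x : R) (j : nat) (z : R) : R :=
  match j with
  | O => z
  | S j' => let z' := ploop f b x j' z in
            if fbit f (S j') then trunc b (z' * root_hat x b j') else z'
  end.

Definition bfp (n m nf l : nat) : nat :=
  Nat.max (Nat.max n nf)
             (Nat.max (Z.to_nat (Rceilz (5 * (INR l + 2 * INR m + ln (INR nf))))) 40).

Lemma FP_eq (x f : R) (n m nf l : nat) : f <> 1 -> f <> 0 ->
  FractionalPower x f n m nf l = ploop f (bfp n m nf l) x nf 1.
Proof.
  intros H1 H0. unfold FractionalPower. fold (bfp n m nf l).
  destruct (Req_EM_T f 1); [contradiction|]. destruct (Req_EM_T f 0); [contradiction|].
  set (b := bfp n m nf l). clearbody b. generalize 1.
  induction nf as [|k IH]; intro z; [reflexivity|].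
  simpl. rewrite IH. reflexivity.
Qed.

Lemma trunc_ln (b : nat) (u : R) : 1/2 <= u -> (40 <= b)%nat ->
  0 < trunc b u /\ ln u - 4 / 2 ^ b <= ln (trunc b u) <= ln u.
Proof.
  intros Hu Hb. destruct (trunc_spec b u) as [T1 T2]. pose proof (small_b b Hb).
  assert (/ 2 ^ 40 = 1/1099511627776) by (simpl; field).
  pose proof (pow2_pos b). assert (0 < / 2 ^ b) by (apply Rinv_0_lt_compat; auto).
  set (tau := / 2 ^ b / u).
  assert (Ht : 0 <= tau <= 2 / 2 ^ b).
  { unfold tau. split. unfold Rdiv; apply Rmult_le_pos; [lra|left; apply Rinv_0_lt_compat; lra].
    assert (/ u <= / (1/2)) by (apply Rinv_le_contravar; lra).
    replace (/ (1/2)) with 2 in H3 by field.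
    unfold Rdiv. rewrite (Rmult_comm 2). apply Rmult_le_compat_l; lra. }
  assert (Hp : 0 < trunc b u) by (unfold Rdiv in *; lra).
  split; auto.
  assert (u * (1 - tau) <= trunc b u).
  { replace (u * (1 - tau)) with (u - / 2 ^ b) by (unfold tau; field; lra). lra. }
  destruct (ln_1m tau) as [L1 L2]. unfold Rdiv in *; lra.
  split.
  - apply Rle_trans with (ln (u * (1 - tau))).
    rewrite ln_mult by (unfold Rdiv in *; lra). unfold Rdiv in *; lra.
    apply ln_le'; auto. apply Rmult_lt_0_compat; unfold Rdiv in *; lra.
  - apply ln_le'; lra.
Qed.

Lemma ploop_inv (x f : R) (b nf : nat) : 1 <= x <= 2 -> 0 <= f < 1 -> (40 <= b)%nat ->
  INR nf * (2 * lam b + 4 / 2 ^ b) <= 1/4 ->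
  forall j, (j <= nf)%nat -> 0 < ploop f b x j 1 /\
    Rabs (ln (ploop f b x j 1) - ln x * Gs f j) <= INR j * (2 * lam b + 4 / 2 ^ b).
Proof.
  intros Hx Hf Hb HK. set (K := 2 * lam b + 4 / 2 ^ b) in *.
  pose proof (lam_small b Hb). pose proof (pow2_pos b).
  assert (0 < / 2 ^ b) by (apply Rinv_0_lt_compat; auto).
  assert (HK0 : 0 <= K) by (unfold K; unfold Rdiv; lra).
  assert (Lx : 0 <= ln x) by (rewrite <- ln_1; apply ln_le'; lra).
  induction j as [|j IH]; intros Hj.
  - simpl. rewrite Gs_0 by auto. rewrite ln_1. split; [lra|]. rewrite Rmult_0_r, Rmult_0_l, Rminus_0_r, Rabs_R0. lra.
  - destruct (IH ltac:(lia)) as [P1 P2]. clear IH.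
    assert (Hj' : INR (S j) * K <= 1/4).
    { apply Rle_trans with (INR nf * K); auto. apply Rmult_le_compat_r; auto. apply le_INR; auto. }
    rewrite S_INR in Hj' |- *.
    simpl ploop. rewrite Gs_step.
    set (z := ploop f b x j 1) in *.
    destruct (fbit f (S j)).
    + destruct (root_lemma x b Hx Hb j) as [R1 R2].
      set (wj := root_hat x b j) in *.
      apply Rabs_split in P2. apply Rabs_split in R2.
      assert (Lu : ln (z * wj) = ln z + ln wj) by (apply ln_mult; auto).
      assert (0 <= ln x * Gs f j) by (apply Rmult_le_pos; auto; apply Gs_nonneg; lra).
      assert (0 <= ln x / 2 ^ S j) by (unfold Rdiv; apply Rmult_le_pos; auto; left; apply Rinv_0_lt_compat, pow2_pos).
      assert (Hu : 1/2 <= z * wj).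
      { apply (ln_bounds_pos _ (1/4)). apply Rmult_lt_0_compat; auto.
        rewrite Lu. unfold K in *. lra. pose proof ln_lt_2. lra. }
      destruct (trunc_ln b (z * wj) Hu Hb) as [T1 [T2 T3]].
      split; auto. apply Rabs_le. unfold K in *. 
      rewrite Rmult_plus_distr_l. unfold Rdiv in *. lra.
    + split; auto. rewrite Rplus_0_r. apply Rabs_le. apply Rabs_split in P2. lra.
Qed.

Lemma nat_exp_bound (k : nat) : (20 <= k)%nat -> (4400 * k <= 3 * Nat.pow 2 k)%nat.
Proof.
  intros Hk. induction k as [|k IH]; [lia|].
  destruct (Nat.eq_dec k 19) as [->|Hne].
  - assert (E : Nat.pow 2 20 = (Nat.pow 2 10 * Nat.pow 2 10)%nat) by (rewrite <- Nat.pow_add_r; reflexivity).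
    assert (E2 : Nat.pow 2 10 = 1024%nat) by reflexivity. rewrite E, E2. lia.
  - specialize (IH ltac:(lia)). rewrite Nat.pow_succ_r'. lia.
Qed.

Lemma nat_main (h l nf : nat) : (32 <= h)%nat -> (nf <= 2 * h)%nat -> (5 * l <= 2 * h)%nat ->
  (440 * nf * Nat.pow 2 l <= Nat.pow 2 h)%nat.
Proof.
  intros H1 H2 H3. set (k := (h - l)%nat).
  assert (Hh : h = (l + k)%nat) by lia. 
  assert (20 <= k)%nat by lia.
  pose proof (nat_exp_bound k H).
  rewrite Hh, Nat.pow_add_r.
  assert (440 * nf <= Nat.pow 2 k)%nat by nia.
  pose proof (Nat.pow_nonzero 2 l ltac:(lia)). nia.
Qed.

Lemma K_bound (b nf l : nat) : (40 <= b)%nat -> (nf <= b)%nat -> (5 * l <= b)%nat ->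
  INR nf * (2 * lam b + 4 / 2 ^ b) <= / (10 * 2 ^ l).
Proof.
  intros Hb Hn Hl. destruct (nsteps_facts b Hb) as [N1 [N2 N3]].
  set (h := Nat.pow 2 (pred (nsteps b))) in *.
  assert (Eh : Nat.pow 2 (nsteps b) = (2 * h)%nat).
  { unfold h. destruct (nsteps b); [lia|]. simpl pred. rewrite Nat.pow_succ_r'. lia. }
  assert (Hh : (32 <= h)%nat). { unfold h. change 32%nat with (Nat.pow 2 5). apply Nat.pow_le_mono_r; lia. }
  pose proof (nat_main h l nf Hh ltac:(lia) ltac:(lia)) as NM.
  apply le_INR in NM. rewrite !mult_INR, !pow_INR in NM. simpl INR in NM.
  replace (1 + 1) with 2 in NM by ring.
  assert (Hbh : / 2 ^ b <= / 2 ^ h) by (apply inv_pow_le; lia).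
  assert (Hlam : lam b <= 20 / 2 ^ h) by (unfold lam; fold h; unfold Rdiv in *; lra).
  pose proof (pow2_pos h). pose proof (pow2_pos l).
  assert (INR nf * (2 * lam b + 4 / 2 ^ b) <= INR nf * (44 / 2 ^ h)).
  { apply Rmult_le_compat_l. apply pos_INR. unfold Rdiv in *; lra. }
  apply Rle_trans with (INR nf * (44 / 2 ^ h)); auto.
  apply Rmult_le_reg_r with (10 * 2 ^ l * 2 ^ h). nra.
  field_simplify; try lra.
Qed.

Lemma ceil_ge (x : R) (N : nat) : INR N <= x -> (N <= Z.to_nat (Rceilz x))%nat.
Proof.
  intros H. unfold Rceilz. destruct (floor_spec (- x)) as [H1 H2]. unfold Rfloorz in H1.
  assert (IZR (Z.of_nat N) <= IZR (- Int_part (- x))) by (rewrite <- INR_IZR_INZ, opp_IZR; lra).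
  apply le_IZR in H0. lia.
Qed.

Lemma ln_INR_nonneg (nf : nat) : (1 <= nf)%nat -> 0 <= ln (INR nf).
Proof. intros. rewrite <- ln_1. apply ln_le'. lra. apply (le_INR 1). auto. Qed.

Lemma bfp_facts (n m nf l : nat) : (1 <= nf)%nat ->
  (40 <= bfp n m nf l)%nat /\ (nf <= bfp n m nf l)%nat /\ (5 * l <= bfp n m nf l)%nat.
Proof.
  intros Hn. unfold bfp.
  assert (5 * l <= Z.to_nat (Rceilz (5 * (INR l + 2 * INR m + ln (INR nf)))))%nat.
  { apply ceil_ge. rewrite mult_INR. simpl INR.
    pose proof (ln_INR_nonneg nf Hn). pose proof (pos_INR m). lra. }
  lia.
Qed.

Lemma fp_lemma (x f : R) (n m nf l : nat) (z : Z) : 1 <= x <= 2 -> 0 <= f < 1 ->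
  2 ^ nf * f = IZR z -> (1 <= nf)%nat ->
  0 < FractionalPower x f n m nf l /\
  Rabs (ln (FractionalPower x f n m nf l) - f * ln x) <= / (10 * 2 ^ l).
Proof.
  intros Hx Hf Hz Hn. destruct (bfp_facts n m nf l Hn) as [B1 [B2 B3]].
  set (b := bfp n m nf l) in *.
  pose proof (K_bound b nf l B1 B2 B3) as KB.
  assert (/ (10 * 2 ^ l) <= 1/10).
  { pose proof (pow2_pos l). assert (1 <= 2 ^ l) by (replace 1 with (2^0) by ring; apply Rle_pow; lia || lra).
    rewrite Rinv_mult. assert (/ 2 ^ l <= 1) by (rewrite <- Rinv_1; apply Rinv_le_contravar; lra).
    pose proof (Rinv_0_lt_compat _ H). nra. }
  assert (0 < / (10 * 2 ^ l)) by (apply Rinv_0_lt_compat; pose proof (pow2_pos l); lra).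
  destruct (Req_EM_T f 0) as [E0|E0].
  - subst f. unfold FractionalPower. destruct (Req_EM_T 0 1); [lra|]. destruct (Req_EM_T 0 0); [|lra].
    rewrite ln_1. split; [lra|]. rewrite Rmult_0_l, Rminus_0_r, Rabs_R0. lra.
  - rewrite FP_eq by lra. fold b.
    destruct (ploop_inv x f b nf Hx Hf B1 ltac:(lra) nf (le_n _)) as [P1 P2].
    rewrite (Gs_nf f nf z Hz) in P2. split; auto. rewrite Rmult_comm. lra.
Qed.

Lemma bsum_int (fb : nat -> bool) (N : nat) :
  exists z, 2 ^ N * bsum (fun i => if fb i then / 2 ^ (S i) else 0) N = IZR z.
Proof.
  induction N as [|N [z Hz]].
  - exists 0%Z. simpl. ring.
  - simpl bsum. exists (2 * z + (if fb N then 1 else 0))%Z.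
    rewrite plus_IZR, mult_IZR. rewrite <- Hz.
    pose proof (pow2_pos N).
    destruct (fb N); simpl; field; lra.
Qed.

Lemma pow2_IZR (N : nat) : 2 ^ N = IZR (2 ^ Z.of_nat N).
Proof. rewrite <- pow_IZR. reflexivity. Qed.

Lemma flog2_neg (w : R) : 0 < w -> w < 1 -> (flog2 w <= -1)%Z.
Proof.
  intros H0 H1. destruct (flog2_spec w H0) as [A _].
  destruct (Z_lt_le_dec (flog2 w) 0) as [?|Hz]; [lia|]. exfalso.
  rewrite pRZ_exp in A. apply IZR_le in Hz.
  pose proof ln2_pos. assert (0 <= IZR (flog2 w) * ln 2) by nra.
  pose proof (exp_ineq1_le (IZR (flog2 w) * ln 2)). lra.
Qed.

Lemma inv_2l (y : R) (l : nat) : 0 < y <= 12/5 -> (4 <= l)%nat ->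
  0 <= 1 - y * INV y (2 * l) <= (1 + 3 * y) / 2 ^ (2 * l) /\ 0 <= INV y (2 * l).
Proof.
  intros Hy Hl. unfold INV. destruct (Req_EM_T y 1) as [E|E].
  - subst. pose proof (pow2_pos (2 * l)). split; [split|]; unfold Rdiv; try lra.
    replace (1 - 1 * 1) with 0 by ring. apply Rmult_le_pos; [lra|left; apply Rinv_0_lt_compat; auto].
  - destruct (inv_loop_weak y (2 * l) ltac:(lra)) as [W1 W2].
    assert (P : 2 ^ 8 <= 2 ^ (2 * l)) by (apply Rle_pow; lra || lia).
    pose proof (pow2_pos (2 * l)).
    assert (Hd : y / 2 ^ (2 * l) <= 1 / 18).
    { apply Rmult_le_reg_r with (2 ^ (2 * l)); auto. field_simplify; try lra. }
    pose proof (inv_loop_strong y (2 * l) ltac:(lra) ltac:(lia) Hd) as S.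
    destruct (Nat.log2_up_spec (2 * l) ltac:(lia)) as [_ Q].
    pose proof (inv_pow_le _ _ Q) as Q'. fold (nsteps (2 * l)) in Q'.
    split; [split|]; auto. unfold Rdiv in *. lra.
Qed.

Theorem theorem5 (n m nf l : nat) (w f : R) :
  0 <= w -> w < 1 -> fixed_repr w n m ->
  0 <= f -> f <= 1 -> frac_repr f nf ->
  Rabs (FractionalPower2 w f n m nf l - rpow w f) <= / powerRZ 2 (Z.of_nat l - 3).
Proof.
  intros Hw0 Hw1 _ Hf0 Hf1 Hfr.
  assert (RHS : / powerRZ 2 (Z.of_nat l - 3) = 8 / 2 ^ l).
  { replace (Z.of_nat l - 3)%Z with (Z.of_nat l + -3)%Z by lia. rewrite pRZ_add, pow_pRZ. replace (powerRZ 2 (-3)) with (/ 8) by (simpl; field).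
    field. pose proof (pRZ_pos (Z.of_nat l)). lra. }
  rewrite RHS. pose proof (pow2_pos l) as Pl.
  assert (R0 : 0 <= 8 / 2 ^ l) by (unfold Rdiv; apply Rmult_le_pos; [lra|left; apply Rinv_0_lt_compat; auto]).
  unfold FractionalPower2, rpow.
  destruct (Req_EM_T w 0) as [Ew|Ew].
  { subst. destruct (Rlt_dec 0 0); [lra|]. rewrite Rminus_0_r, Rabs_R0. auto. }
  assert (Hw : 0 < w) by lra.
  destruct (Rlt_dec 0 w) as [_|?]; [|lra].
  destruct (Req_EM_T f 1) as [Ef|Ef].
  { subst. rewrite Rpower_1 by auto. rewrite Rminus_diag, Rabs_R0. auto. }
  destruct (Req_EM_T f 0) as [Ef0|Ef0].
  { subst. rewrite Rpower_O by auto. rewrite Rminus_diag, Rabs_R0. auto. }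
  destruct Hfr as [[fb Hfb]|?]; [|contradiction].
  destruct (bsum_int fb nf) as [zf Hzf]. rewrite <- Hfb in Hzf.
  assert (Hf : 0 < f < 1) by lra.
  assert (Hnf : (1 <= nf)%nat).
  { destruct nf; [|lia]. simpl in Hfb. lra. }
  cbv zeta.
  set (B := Nat.max (Nat.max n nf)
             (Nat.max (Z.to_nat (Rceilz (2 * INR l + 6 * INR m + 2 * ln (INR nf)))) 40)).
  assert (HB : (l <= B)%nat).
  { assert (l <= Z.to_nat (Rceilz (2 * INR l + 6 * INR m + 2 * ln (INR nf))))%nat.
    { apply ceil_ge. pose proof (ln_INR_nonneg nf Hnf). pose proof (pos_INR m). pose proof (pos_INR l). lra. }
    unfold B. lia. }
  pose proof (flog2_spec w Hw) as [Fl1 Fl2]. pose proof (flog2_neg w Hw Hw1) as Fneg.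
  set (F := flog2 w) in *.
  set (k := (- F)%Z).
  set (x := powerRZ 2 k * w).
  assert (Hx : 1 <= x <= 2).
  { unfold x, k. rewrite powerRZ_neg'. pose proof (pRZ_pos F). rewrite pRZ_add, pRZ_1 in Fl2.
    split; apply Rmult_le_reg_l with (powerRZ 2 F); auto; field_simplify; lra. }
  set (c := IZR k * f).
  set (fl := Rfloorz c). set (fr := Rfrac c).
  assert (Hfr : 0 <= fr < 1) by (unfold fr, Rfrac; fold fl; pose proof (floor_spec c); fold fl in H; lra).
  assert (Hzr : 2 ^ nf * fr = IZR (k * zf - 2 ^ Z.of_nat nf * fl)).
  { unfold fr, Rfrac. fold fl. unfold c. rewrite minus_IZR, !mult_IZR, <- pow2_IZR, <- Hzf. ring. }
  destruct (fp_lemma x f n m nf l zf Hx (conj Hf0 (proj2 Hf)) Hzf Hnf) as [Z1 Z2].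
  destruct (fp_lemma 2 fr n m nf l _ ltac:(lra) Hfr Hzr Hnf) as [Y1 Y2].
  set (zh := FractionalPower x f n m nf l) in *.
  set (yh := FractionalPower 2 fr n m nf l) in *.
  set (eps := / (10 * 2 ^ l)) in *.
  assert (Heps : 0 < eps <= 1/10).
  { unfold eps. split. apply Rinv_0_lt_compat; lra.
    assert (1 <= 2 ^ l) by (replace 1 with (2^0) by ring; apply Rle_pow; lia || lra).
    rewrite Rinv_mult. assert (/ 2 ^ l <= 1) by (rewrite <- Rinv_1; apply Rinv_le_contravar; lra).
    pose proof (Rinv_0_lt_compat _ Pl). nra. }
  apply Rabs_split in Z2. apply Rabs_split in Y2.
  set (W := Rpower w f).
  assert (HW : 0 < W <= 1).
  { unfold W, Rpower. split. apply exp_pos.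
    assert (ln w < 0) by (rewrite <- ln_1; apply ln_increasing; lra).
    rewrite <- exp_0. apply exp_le'. nra. }
  set (th := (ln zh - f * ln x) - (ln yh - fr * ln 2)).
  assert (Hth : Rabs th <= 2 * eps) by (apply Rabs_le; unfold th; lra).
  set (v := powerRZ 2 (- fl) * zh).
  assert (Key : v / yh = W * exp th).
  { assert (Lx : ln x = IZR k * ln 2 + ln w) by (unfold x; rewrite ln_mult, ln_pRZ; auto; apply pRZ_pos).
    assert (Hc : c = IZR fl + fr) by (unfold fr, Rfrac; fold fl; ring).
    unfold W, Rpower. rewrite <- exp_plus.
    rewrite <- (exp_ln (v / yh)).
    2: { unfold v, Rdiv. apply Rmult_lt_0_compat; [apply Rmult_lt_0_compat; auto; apply pRZ_pos| apply Rinv_0_lt_compat; auto]. }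
    f_equal. unfold v, Rdiv. rewrite ln_mult, ln_mult, ln_Rinv, ln_pRZ; auto.
    2: apply pRZ_pos. 2: apply Rmult_lt_0_compat; auto; apply pRZ_pos. 2: apply Rinv_0_lt_compat; auto.
    unfold th. rewrite Lx. unfold c in Hc. rewrite opp_IZR.
    replace (IZR fl) with (IZR k * f - fr) by lra. ring. }
  assert (Hyh : yh <= 12/5).
  { rewrite <- (exp_ln yh) by auto.
    assert (ln yh <= ln 2 + 1/10).
    { assert (fr * ln 2 <= ln 2) by (pose proof ln2_pos; nra). lra. }
    apply Rle_trans with (exp (ln 2 + 1/10)). apply exp_le'; auto.
    rewrite exp_plus, exp_ln by lra.
    assert (E10 : Rabs (1/10) = 1/10) by (rewrite Rabs_right; lra).
    assert (Rabs (1/10) <= 1/2) by lra.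
    pose proof (exp_bound _ H0). rewrite E10 in H1. apply Rabs_split in H1. lra. }
  set (sh := INV yh (2 * l)).
  assert (Hsh : 0 <= sh /\ 0 <= 1 - yh * sh).
  { unfold sh, INV. destruct (Req_EM_T yh 1) as [E|E]. rewrite E. lra.
    apply inv_loop_weak; auto. }
  set (es := 1 - yh * sh) in *.
  assert (Vs : v * sh = W * exp th * (1 - es)).
  { rewrite <- Key. unfold es. field. lra. }
  assert (Eth : Rabs (exp th - 1) <= 2 * Rabs th) by (apply exp_bound; lra).
  apply Rabs_split in Eth.
  assert (E4 : - (4 * eps) <= exp th - 1 <= 4 * eps) by lra.
  apply Rabs_split in Hth.
  pose proof (exp_pos th) as Pth.
  destruct (trunc_spec B (v * sh)) as [T1 T2].
  assert (Hvs0 : 0 <= v * sh).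
  { apply Rmult_le_pos; [|tauto]. unfold v. apply Rmult_le_pos; [left; apply pRZ_pos| lra]. }
  pose proof (trunc_nonneg B (v * sh) Hvs0) as T0.
  set (t := trunc B (v * sh)) in *.
  destruct (le_lt_dec 4 l) as [Hl|Hl].
  - destruct (inv_2l yh l (conj Y1 Hyh) Hl) as [[I1 I2] _]. fold sh es in I1, I2.
    assert (Q1 : / 2 ^ B <= / 2 ^ l) by (apply inv_pow_le; auto).
    assert (Q2 : / 2 ^ (2 * l) <= / 16 * / 2 ^ l).
    { replace (2 * l)%nat with (l + l)%nat by lia. rewrite pow_add, Rinv_mult.
      assert (/ 2 ^ l <= / 2 ^ 4) by (apply inv_pow_le; auto).
      assert (0 < / 2 ^ l) by (apply Rinv_0_lt_compat; auto).
      replace (/ 2 ^ 4) with (/16) in H by (simpl; field). nra. }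
    set (IL := / 2 ^ l) in *.
    assert (Eeps : eps = IL / 10) by (unfold eps, IL; rewrite Rinv_mult; unfold Rdiv; ring).
    assert (Hes : es <= 41/80 * IL).
    { unfold Rdiv in I2. apply Rle_trans with ((1 + 3 * yh) * (/ 16 * IL)). 
      apply Rle_trans with ((1 + 3 * yh) * / 2 ^ (2 * l)); auto. apply Rmult_le_compat_l; lra.
      assert (0 <= IL) by (unfold IL; left; apply Rinv_0_lt_compat; auto). nra. }
    assert (B1 : - (4 * eps) <= W * (exp th - 1) <= 4 * eps).
    { assert (0 <= eps) by lra. split.
      - apply Rle_trans with (W * (- (4 * eps))). nra. apply Rmult_le_compat_l; lra.
      - apply Rle_trans with (W * (4 * eps)). apply Rmult_le_compat_l; lra. nra. }
    assert (B2 : 0 <= W * exp th * es <= 14/10 * es).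
    { split. apply Rmult_le_pos; [nra|lra]. assert (W * exp th <= 14/10) by nra. nra. }
    assert (Ed : v * sh - W = W * (exp th - 1) - W * exp th * es) by (rewrite Vs; ring).
    unfold Rdiv. fold IL. apply Rabs_le. split; lra.
  - assert (Hl' : 1 <= 8 / 2 ^ l).
    { apply Rmult_le_reg_r with (2 ^ l); auto. field_simplify; try lra.
      assert (2 ^ l <= 2 ^ 3) by (apply Rle_pow; lra || lia). simpl in H. lra. }
    assert (W * exp th * (1 - es) <= W * (14/10)).
    { assert (W * exp th * (1 - es) <= W * exp th) by (assert (0 <= W * exp th) by nra; nra). nra. }
    apply Rabs_le. split; lra.
Qed.
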